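(* The conditional logics $\mathsf{CKCEM}$ and $\mathsf{CKCEMID}$ do not have the uniform Lyndon interpolation property.
   Context: Formulas of $\mathcal{L}_\triangleright$: atoms, $\bot$, $\wedge,\vee,\to$, binary $\triangleright$; $\top:=\bot\to\bot$, $\neg A:=A\to\bot$. $\mathsf{CE}$ is the smallest set containing all instances of classical tautologies and closed under modus ponens and the rule: from $\phi_0\leftrightarrow\phi_1$ and $\psi_0\leftrightarrow\psi_1$ infer $(\phi_0\triangleright\psi_0)\to(\phi_1\triangleright\psi_1)$. $\mathsf{CKCEM}$ is $\mathsf{CE}$ plus all instances of (CM) $(\phi\triangleright\psi\wedge\theta)\to(\phi\triangleright\psi)\wedge(\phi\triangleright\theta)$, (CC) $(\phi\triangleright\psi)\wedge(\phi\triangleright\theta)\to(\phi\triangleright\psi\wedge\theta)$, (CN) $\phi\triangleright\top$, (CEM) $(\phi\triangleright\psi)\vee(\phi\triangleright\neg\psi)$; $\mathsf{CKCEMID}=\mathsf{CKCEM}+$(ID) $\phi\triangleright\phi$. Positive/negative variables: $V^+(p)=\{p\}$, $V^-(p)=\varnothing$; $V^\pm(\bot)=V^\pm(\top)=\varnothing$; $V^\pm(\phi\odot\psi)=V^\pm(\phi)\cup V^\pm(\psi)$ for $\odot\in\{\wedge,\vee\}$; $V^+(\phi\to\psi)=V^-(\phi)\cup V^+(\psi)$, $V^-(\phi\to\psi)=V^+(\phi)\cup V^-(\psi)$; $V^+(\phi\triangleright\psi)=V^-(\phi)\cup V^+(\psi)$, $V^-(\phi\triangleright\psi)=V^+(\phi)\cup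 V^-(\psi)$. $p^\circ$-free: $p\notin V^\circ(\cdot)$. ULIP for a logic $L$: for every formula $\phi$, atom $p$, $\circ\in\{+,-\}$ there are $p^\circ$-free formulas $\forall^\circ p\,\phi$, $\exists^\circ p\,\phi$ with $V^\dagger(\cdot)\subseteq V^\dagger(\phi)$ for both $\dagger\in\{+,-\}$, such that $L\vdash\forall^\circ p\,\phi\to\phi$; for every $p^\circ$-free $\psi$, $L\vdash\psi\to\phi$ implies $L\vdash\psi\to\forall^\circ p\,\phi$; $L\vdash\phi\to\exists^\circ p\,\phi$; for every $p^\circ$-free $\psi$, $L\vdash\phi\to\psi$ implies $L\vdash\exists^\circ p\,\phi\to\psi$. *)

(* Defs.v *)
From Stdlib Require Import Bool Arith.

Inductive form : Type :=
| Atom : nat -> form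
| Bot : form
| And : form -> form -> form
| Or : form -> form -> form
| Imp : form -> form -> form
| Cond : form -> form -> form.

Definition Top : form := Imp Bot Bot.
Definition Neg (A : form) : form := Imp A Bot.
Definition Iff (A B : form) : form := And (Imp A B) (Imp B A).

Fixpoint propositional (f : form) : bool :=
  match f with
  | Atom _ | Bot => true
  | And a b | Or a b | Imp a b => propositional a && propositional b
  | Cond _ _ => false
  end.

Fixpoint eval (v : nat -> bool) (f : form) : bool :=
  match f with
  | Atom n => v n
  | Bot => false
  | And a b => eval v a && eval v b
  | Or a b => eval v a || eval v b
  | Imp a b => implb (eval v a) (eval v b)
  | Cond _ _ => false (* irrelevant: only used on propositional formulas *)
  end.

Fixpoint subst (s : nat -> form) (f : form) : form :=
  match f with
  | Atom n => s n
  | Bot => Bot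
  | And a b => And (subst s a) (subst s b)
  | Or a b => Or (subst s a) (subst s b)
  | Imp a b => Imp (subst s a) (subst s b)
  | Cond a b => Cond (subst s a) (subst s b)
  end.

Definition taut_instance (phi : form) : Prop :=
  exists (t : form) (s : nat -> form),
    propositional t = true /\ (forall v, eval v t = true) /\ subst s t = phi.

Inductive derivable (Ax : form -> Prop) : form -> Prop :=
| d_taut : forall phi, taut_instance phi -> derivable Ax phi
| d_ax : forall phi, Ax phi -> derivable Ax phi
| d_mp : forall phi psi, derivable Ax (Imp phi psi) -> derivable Ax phi ->
         derivable Ax psi
| d_re : forall phi0 phi1 psi0 psi1,
         derivable Ax (Iff phi0 phi1) -> derivable Ax (Iff psi0 psi1) ->
         derivable Ax (Imp (Cond phi0 psi0) (Cond phi1 psi1)).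

Definition CE : form -> Prop := derivable (fun _ => False).

Inductive CKCEM_ax : form -> Prop :=
| ax_CM : forall phi psi th,
    CKCEM_ax (Imp (Cond phi (And psi th)) (And (Cond phi psi) (Cond phi th)))
| ax_CC : forall phi psi th,
    CKCEM_ax (Imp (And (Cond phi psi) (Cond phi th)) (Cond phi (And psi th)))
| ax_CN : forall phi, CKCEM_ax (Cond phi Top)
| ax_CEM : forall phi psi, CKCEM_ax (Or (Cond phi psi) (Cond phi (Neg psi))).

Definition CKCEMID_ax (f : form) : Prop :=
  CKCEM_ax f \/ exists phi, f = Cond phi phi.

Definition CKCEM : form -> Prop := derivable CKCEM_ax.
Definition CKCEMID : form -> Prop := derivable CKCEMID_ax.

(* occ true p f  <-> p in V^+(f);  occ false p f <-> p in V^-(f) *)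
Fixpoint occ (pos : bool) (p : nat) (f : form) : bool :=
  match f with
  | Atom q => pos && Nat.eqb q p
  | Bot => false
  | And a b | Or a b => occ pos p a || occ pos p b
  | Imp a b | Cond a b => occ (negb pos) p a || occ pos p b
  end.

(* Uniform Lyndon interpolation property for a logic L (set of theorems);
   the sign o in {+,-} is encoded by the boolean pos. *)
Definition ULIP (L : form -> Prop) : Prop :=
  forall (phi : form) (p : nat) (pos : bool),
    exists (A E : form),
      occ pos p A = false /\
      (forall (d : bool) (q : nat), occ d q A = true -> occ d q phi = true) /\
      L (Imp A phi) /\
      (forall psi, occ pos p psi = false -> L (Imp psi phi) -> L (Imp psi A)) /\
      occ pos p E = false /\
      (forall (d : bool) (q : nat), occ d q E = true -> occ d q phi = true) /\
      L (Imp phi E) /\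
      (forall psi, occ pos p psi = false -> L (Imp phi psi) -> L (Imp E psi)).

(* Main.v *)
Require Import Defs.
From Stdlib Require Import Bool Arith.

Fixpoint truth (V : nat -> bool -> bool) (w : bool) (f : form) : bool :=
  match f with
  | Atom n => V n w
  | Bot => false
  | And a b => truth V w a && truth V w b
  | Or a b => truth V w a || truth V w b
  | Imp a b => implb (truth V w a) (truth V w b)
  | Cond a b =>
      if truth V true a then truth V true b
      else if truth V false a then truth V false b else true
  end.

Definition valid (f : form) : Prop := forall V w, truth V w f = true.

Lemma subst_truth : forall V w s t, propositional t = true ->
  truth V w (subst s t) = eval (fun n => truth V w (s n)) t.
Proof.
  intros V w s t; induction t; simpl; intros H; try reflexivity;
  try (apply andb_prop in H; destruct H as [H1 H2];
       rewrite IHt1, IHt2 by assumption; reflexivity).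
  discriminate.
Qed.

Lemma soundness : forall (Ax : form -> Prop), (forall f, Ax f -> valid f) ->
  forall phi, derivable Ax phi -> valid phi.
Proof.
  intros Ax HAx phi D; induction D.
  - destruct H as [t [s [Hp [Ht Hs]]]]. subst phi. intros V w.
    rewrite subst_truth by assumption. apply Ht.
  - apply HAx; assumption.
  - intros V w. specialize (IHD1 V w). specialize (IHD2 V w). simpl in IHD1.
    rewrite IHD2 in IHD1. exact IHD1.
  - intros V w.
    assert (E0 : forall w, truth V w phi0 = truth V w phi1).
    { intro u. specialize (IHD1 V u). simpl in IHD1.
      destruct (truth V u phi0), (truth V u phi1); simpl in *; congruence. }
    assert (E1 : forall w, truth V w psi0 = truth V w psi1).
    { intro u. specialize (IHD2 V u). simpl in IHD2.
      destruct (truth V u psi0), (truth V u psi1); simpl in *; congruence. }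
    simpl. rewrite !E0, !E1. destruct (truth V true phi1), (truth V false phi1),
      (truth V true psi1), (truth V false psi1); reflexivity.
Qed.

Lemma CKCEM_sound : forall f, CKCEM_ax f -> valid f.
Proof.
  intros f H V w; destruct H; simpl;
  repeat match goal with |- context [truth V ?u ?x] =>
    match x with Atom _ => fail 1 | _ => destruct (truth V u x) end end;
  reflexivity.
Qed.

Lemma CKCEMID_sound : forall f, CKCEMID_ax f -> valid f.
Proof.
  intros f [H|[phi ->]]. apply CKCEM_sound; assumption.
  intros V w; simpl. destruct (truth V true phi) eqn:E1; auto.
  destruct (truth V false phi) eqn:E2; auto.
Qed.

Lemma indep : forall p f V1 V2 w, (forall n, n <> p -> V1 n = V2 n) ->
  occ true p f = false -> occ false p f = false -> truth V1 w f = truth V2 w f.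
Proof.
  intros p f; induction f; intros V1 V2 w HV H1 H2; simpl in *;
  repeat match goal with H : (_ || _) = false |- _ => apply orb_false_elim in H; destruct H end;
  try reflexivity.
  - rewrite HV; auto. intro; subst. rewrite Nat.eqb_refl in H1. discriminate.
  - rewrite (IHf1 V1 V2), (IHf2 V1 V2); auto.
  - rewrite (IHf1 V1 V2), (IHf2 V1 V2); auto.
  - rewrite (IHf1 V1 V2), (IHf2 V1 V2); auto.
  - rewrite !(IHf1 V1 V2), !(IHf2 V1 V2); auto.
Qed.

Lemma no_ulip : forall Ax, (forall f, Ax f -> valid f) ->
  (forall phi psi, Ax (Or (Cond phi psi) (Cond phi (Neg psi)))) ->
  ~ ULIP (derivable Ax).
Proof.
  intros Ax Hs Hcem U.
  destruct (U (Cond (Atom 0) (Atom 1)) 0 false)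
    as [A [E [H1 [H2 [H3 [H4 _]]]]]].
  set (psi := Neg (Cond (Atom 0) (Neg (Atom 1)))).
  assert (Hpsi : derivable Ax (Imp psi (Cond (Atom 0) (Atom 1)))).
  { eapply d_mp; [| apply d_ax, Hcem].
    apply d_taut.
    exists (Imp (Or (Atom 0) (Atom 1)) (Imp (Neg (Atom 1)) (Atom 0))).
    exists (fun n => match n with 0 => Cond (Atom 0) (Atom 1)
                    | _ => Cond (Atom 0) (Neg (Atom 1)) end).
    split; [reflexivity | split; [| reflexivity]].
    intro v; simpl; destruct (v 0), (v 1); reflexivity. }
  specialize (H4 psi eq_refl Hpsi).
  assert (Ht : occ true 0 A = false).
  { destruct (occ true 0 A) eqn:E'; auto. apply H2 in E'. discriminate. }
  pose proof (soundness Ax Hs _ H3) as VA.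
  pose proof (soundness Ax Hs _ H4) as VP.
  set (V1 := fun n (w : bool) => if Nat.eqb n 0 then true else w).
  set (V2 := fun n (w : bool) => if Nat.eqb n 0 then negb w else w).
  specialize (VP V1 true). simpl in VP.
  assert (TA : truth V1 true A = true) by (destruct (truth V1 true A); auto).
  rewrite (indep 0 A V1 V2) in TA; auto.
  - specialize (VA V2 true). simpl in VA. rewrite TA in VA. discriminate.
  - intros n Hn. unfold V1, V2. apply Nat.eqb_neq in Hn. rewrite Hn. reflexivity.
Qed.

Theorem mainTheorem14 : ~ ULIP CKCEM /\ ~ ULIP CKCEMID.
Proof.
  split.
  - apply no_ulip. apply CKCEM_sound. intros; apply ax_CEM.
  - apply no_ulip. apply CKCEMID_sound. intros; left; apply ax_CEM.
Qed.
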